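(* Let $\mathsf L$ be an intermediate logic with $\mathsf{ND}\subseteq\mathsf L$, and let $\phi$ be a consistent formula. The following are equivalent: (i) $\vdash_{\mathsf L^\neg}\phi\leftrightarrow\neg\neg\phi$; (ii) $\phi$ is $\mathcal{ST}$-projective in $\mathsf L^\neg$, where $\mathcal{ST}$ is the class of all substitutions stable in $\mathsf L^\neg$.
   Context: Formulas are built from propositional variables, $\bot,\top$ with $\wedge,\vee,\to$; $\neg\phi:=\phi\to\bot$. An intermediate theory is a set $\mathsf T$ of formulas closed under modus ponens with $\mathsf{IPC}\subseteq\mathsf T\subseteq\mathsf{CPC}$; an intermediate logic is an intermediate theory closed under uniform substitution. $\Gamma\vdash_{\mathsf T}\phi$ means $\phi$ is derivable from $\Gamma\cup\mathsf T$ by modus ponens; $\vdash_{\mathsf T}\phi$ means $\phi\in\mathsf T$. $\mathsf{ND}$ is the intermediate logic axiomatized over $\mathsf{IPC}$ by all substitution instances of $(\neg p\to\bigvee_{i=1}^k\neg q_i)\to\bigvee_{i=1}^k(\neg p\to\neg q_i)$ for $k\ge1$. For an intermediate logic $\mathsf L$, $\phi^\neg$ is obtained by replacing each propositional variable $p$ in $\phi$ by $\neg p$, and $\mathsf L^\neg=\{\phi\mid\phi^\neg\in\mathsf L\}$. A substitution is a map on formulas commuting with connectives and constants; it is stable in $\mathsf L^\neg$ if $\vdash_{\mathsf L^\neg}\sigma(p)\leftrightarrow\neg\neg\sigma(p)$ for all variables $p$. $\phi$ is consistent if $\phi\nvdash_{\mathsf L^\neg}\bot$. For a set $\mathcal S$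 of substitutions, $\phi$ is $\mathcal S$-projective in $\mathsf L^\neg$ if there is $\sigma\in\mathcal S$ with $\vdash_{\mathsf L^\neg}\sigma(\phi)$, and $\phi,\sigma(p)\vdash_{\mathsf L^\neg}p$ and $\phi,p\vdash_{\mathsf L^\neg}\sigma(p)$ for all variables $p$. *)

(* Defs.v *)
From Stdlib Require Import List.
Import ListNotations.

Inductive form : Type :=
| Var : nat -> form
| Bot : form
| Top : form
| And : form -> form -> form
| Or  : form -> form -> form
| Imp : form -> form -> form.

Definition Neg (a : form) : form := Imp a Bot.
Definition Iff (a b : form) : form := And (Imp a b) (Imp b a).

Fixpoint subst (s : nat -> form) (f : form) : form :=
  match f with
  | Var p => s p
  | Bot => Bot
  | Top => Top
  | And a b => And (subst s a) (subst s b)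
  | Or a b => Or (subst s a) (subst s b)
  | Imp a b => Imp (subst s a) (subst s b)
  end.

Inductive IPC : form -> Prop :=
| ipc_K  a b   : IPC (Imp a (Imp b a))
| ipc_S  a b c : IPC (Imp (Imp a (Imp b c)) (Imp (Imp a b) (Imp a c)))
| ipc_A1 a b   : IPC (Imp (And a b) a)
| ipc_A2 a b   : IPC (Imp (And a b) b)
| ipc_A3 a b   : IPC (Imp a (Imp b (And a b)))
| ipc_O1 a b   : IPC (Imp a (Or a b))
| ipc_O2 a b   : IPC (Imp b (Or a b))
| ipc_O3 a b c : IPC (Imp (Imp a c) (Imp (Imp b c) (Imp (Or a b) c)))
| ipc_EF a     : IPC (Imp Bot a)
| ipc_T        : IPC Top
| ipc_MP a b   : IPC (Imp a b) -> IPC a -> IPC b.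

Fixpoint eval (v : nat -> bool) (f : form) : bool :=
  match f with
  | Var p => v p
  | Bot => false
  | Top => true
  | And a b => andb (eval v a) (eval v b)
  | Or a b => orb (eval v a) (eval v b)
  | Imp a b => orb (negb (eval v a)) (eval v b)
  end.

Definition CPC (f : form) : Prop := forall v, eval v f = true.

Definition MP_closed (T : form -> Prop) : Prop :=
  forall a b, T (Imp a b) -> T a -> T b.

Definition intermediate_theory (T : form -> Prop) : Prop :=
  MP_closed T /\ (forall f, IPC f -> T f) /\ (forall f, T f -> CPC f).

Definition intermediate_logic (L : form -> Prop) : Prop :=
  intermediate_theory L /\ (forall s f, L f -> L (subst s f)).

Fixpoint bigOr (l : list form) : form :=
  match l with
  | [] => Bot
  | [x] => x
  | x :: xs => Or x (bigOr xs)
  end.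

(** The ND_k axiom, k >= 1, with p := Var 0 and q_i := Var i (1 <= i <= k):
    (~p -> \/_{i=1}^k ~q_i) -> \/_{i=1}^k (~p -> ~q_i). *)
Definition ND_axiom (k : nat) : form :=
  let qs := map Var (seq 1 k) in
  Imp (Imp (Neg (Var 0)) (bigOr (map Neg qs)))
      (bigOr (map (fun q => Imp (Neg (Var 0)) (Neg q)) qs)).

Inductive ND : form -> Prop :=
| nd_ipc f : IPC f -> ND f
| nd_ax (k : nat) (s : nat -> form) : 1 <= k -> ND (subst s (ND_axiom k))
| nd_MP a b : ND (Imp a b) -> ND a -> ND b.

Definition negsub (f : form) : form := subst (fun p => Neg (Var p)) f.

Definition Lneg (L : form -> Prop) : form -> Prop := fun f => L (negsub f).

Inductive derives (T : form -> Prop) (G : list form) : form -> Prop :=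
| der_hyp f : In f G -> derives T G f
| der_thm f : T f -> derives T G f
| der_MP a b : derives T G (Imp a b) -> derives T G a -> derives T G b.

Definition stable (L : form -> Prop) (s : nat -> form) : Prop :=
  forall p, Lneg L (Iff (s p) (Neg (Neg (s p)))).

Definition consistent (L : form -> Prop) (f : form) : Prop :=
  ~ derives (Lneg L) [f] Bot.

Definition projective (L : form -> Prop) (S : (nat -> form) -> Prop) (f : form) : Prop :=
  exists s, S s /\ Lneg L (subst s f) /\
    (forall p, derives (Lneg L) [f; s p] (Var p)) /\
    (forall p, derives (Lneg L) [f; Var p] (s p)).

(* Main.v *)
Require Import Defs.
From Stdlib Require Import List Arith Lia Classical Bool.
Import ListNotations.


Lemma IPC_subst s f : IPC f -> IPC (subst s f).
Proof. induction 1; simpl; try constructor. eapply ipc_MP; eauto. Qed.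

Lemma subst_subst s t f : subst s (subst t f) = subst (fun p => subst s (t p)) f.
Proof. induction f; simpl; congruence. Qed.

Lemma subst_ext s1 s2 f : (forall p, s1 p = s2 p) -> subst s1 f = subst s2 f.
Proof. intros H; induction f; simpl; congruence. Qed.

Lemma subst_id f : subst Var f = f.
Proof. induction f; simpl; congruence. Qed.

Fixpoint bnd (f : form) : nat :=
  match f with
  | Var p => S p
  | Bot | Top => 0
  | And a b | Or a b | Imp a b => Nat.max (bnd a) (bnd b)
  end.

Lemma subst_bnd s f : (forall p, p < bnd f -> s p = Var p) -> subst s f = f.
Proof.
  induction f; simpl; intros H; try reflexivity;
  try (rewrite IHf1, IHf2; [reflexivity| intros; apply H; lia | intros; apply H; lia]).
  apply H; lia.
Qed.

Definition D := derives.

Lemma ax T G f : (forall f, IPC f -> T f) -> IPC f -> derives T G f.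
Proof. intros HI H; apply der_thm, HI, H. Qed.

Lemma weaken T G G' f : derives T G f -> incl G G' -> derives T G' f.
Proof. induction 1; intros Hi. apply der_hyp; auto. apply der_thm; auto. eapply der_MP; eauto. Qed.

Lemma lift T G f : derives T [] f -> derives T G f.
Proof. intros H; eapply weaken; eauto. intros x []. Qed.

Lemma ipc_id a : IPC (Imp a a).
Proof.
  eapply ipc_MP. eapply ipc_MP. apply (ipc_S a (Imp a a) a). apply ipc_K. apply (ipc_K a a).
Qed.

Lemma ded T G a b : (forall f, IPC f -> T f) -> derives T (a :: G) b -> derives T G (Imp a b).
Proof.
  intros HI H. remember (a :: G) as G0. induction H; subst.
  - destruct H as [<-|H]. apply ax; auto using ipc_id.
    eapply der_MP. apply ax; auto. apply ipc_K. apply der_hyp; auto.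
  - eapply der_MP. apply ax; auto. apply ipc_K. apply der_thm; auto.
  - eapply der_MP. eapply der_MP. apply ax; auto. apply ipc_S. apply IHderives1; auto. apply IHderives2; auto.
Qed.
Lemma andI T G a b : (forall f, IPC f -> T f) -> derives T G a -> derives T G b -> derives T G (And a b).
Proof. intros HI H1 H2. eapply der_MP. eapply der_MP. apply ax; auto. apply ipc_A3. all: auto. Qed.
Lemma andE1 T G a b : (forall f, IPC f -> T f) -> derives T G (And a b) -> derives T G a.
Proof. intros HI H. eapply der_MP. apply ax; auto. apply (ipc_A1 a b). auto. Qed.
Lemma andE2 T G a b : (forall f, IPC f -> T f) -> derives T G (And a b) -> derives T G b.
Proof. intros HI H. eapply der_MP. apply ax; auto. apply (ipc_A2 a b). auto. Qed.
Lemma orI1 T G a b : (forall f, IPC f -> T f) -> derives T G a -> derives T G (Or a b).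
Proof. intros HI H. eapply der_MP. apply ax; auto. apply ipc_O1. auto. Qed.
Lemma orI2 T G a b : (forall f, IPC f -> T f) -> derives T G b -> derives T G (Or a b).
Proof. intros HI H. eapply der_MP. apply ax; auto. apply ipc_O2. auto. Qed.
Lemma orE T G a b c : (forall f, IPC f -> T f) -> derives T G (Or a b) ->
  derives T (a :: G) c -> derives T (b :: G) c -> derives T G c.
Proof. intros HI H H1 H2. eapply der_MP. eapply der_MP. eapply der_MP. apply ax; auto. apply (ipc_O3 a b c).
  apply ded; auto. apply ded; auto. auto. Qed.
Lemma botE T G a : (forall f, IPC f -> T f) -> derives T G Bot -> derives T G a.
Proof. intros HI H. eapply der_MP. apply ax; auto. apply ipc_EF. auto. Qed.
Lemma topI T G : (forall f, IPC f -> T f) -> derives T G Top.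
Proof. intros HI. apply ax; auto. apply ipc_T. Qed.

Ltac hyp := apply der_hyp; simpl; repeat (first [left; reflexivity | right]); fail.
Ltac I := apply ded; [assumption|].
Ltac mp := eapply der_MP.

Lemma iffI T G a b : (forall f, IPC f -> T f) -> derives T (a::G) b -> derives T (b::G) a -> derives T G (Iff a b).
Proof. intros HI H1 H2. apply andI; auto; I; auto. Qed.
Lemma iffE1 T G a b : (forall f, IPC f -> T f) -> derives T G (Iff a b) -> derives T G a -> derives T G b.
Proof. intros HI H1 H2. mp. eapply andE1; eauto. auto. Qed.
Lemma iffE2 T G a b : (forall f, IPC f -> T f) -> derives T G (Iff a b) -> derives T G b -> derives T G a.
Proof. intros HI H1 H2. mp. eapply andE2; eauto. auto. Qed.
Lemma wk T G a f : derives T G f -> derives T (a :: G) f.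
Proof. intros H; eapply weaken; eauto. intros x Hx; simpl; auto. Qed.
Lemma wk2 T G a b f : derives T G f -> derives T (a :: b :: G) f.
Proof. intros H; eapply weaken; eauto. intros x Hx; simpl; auto. Qed.

Lemma replace T (HI : forall f, IPC f -> T f) G s1 s2 :
  (forall p, derives T G (Iff (s1 p) (s2 p))) ->
  forall f, derives T G (Iff (subst s1 f) (subst s2 f)).
Proof.
  intros Hs f; induction f; simpl; auto.
  - apply iffI; auto; hyp.
  - apply iffI; auto; hyp.
  - apply iffI; auto.
    + apply andI; auto. eapply iffE1; auto. apply wk; eauto. eapply andE1; eauto. hyp.
      eapply iffE1; auto. apply wk; eauto. eapply andE2; eauto. hyp.
    + apply andI; auto. eapply iffE2; auto. apply wk; eauto. eapply andE1; eauto. hyp.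
      eapply iffE2; auto. apply wk; eauto. eapply andE2; eauto. hyp.
  - apply iffI; auto.
    + eapply orE; auto. hyp. apply orI1; auto. eapply iffE1; auto. apply wk2; eauto. hyp.
      apply orI2; auto. eapply iffE1; auto. apply wk2; eauto. hyp.
    + eapply orE; auto. hyp. apply orI1; auto. eapply iffE2; auto. apply wk2; eauto. hyp.
      apply orI2; auto. eapply iffE2; auto. apply wk2; eauto. hyp.
  - apply iffI; auto.
    + I. eapply iffE1; auto. apply wk2; eauto. mp. hyp. eapply iffE2; auto. apply wk2; eauto. hyp.
    + I. eapply iffE2; auto. apply wk2; eauto. mp. hyp. eapply iffE1; auto. apply wk2; eauto. hyp.
Qed.
Definition cst (v : nat -> bool) (p : nat) : form := if v p then Top else Bot.

Lemma kal T (HI : forall f, IPC f -> T f) G v f :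
  (eval v f = true -> derives T G (subst (cst v) f)) /\
  (eval v f = false -> derives T G (Neg (subst (cst v) f))).
Proof.
  induction f; simpl.
  - unfold cst; destruct (v n); split; intros E; try discriminate.
    apply topI; auto. I; hyp.
  - split; intros E; [discriminate| I; hyp].
  - split; intros E; [apply topI; auto|discriminate].
  - destruct IHf1 as [A1 B1], IHf2 as [A2 B2]. split; intros E.
    + apply andb_true_iff in E as [E1 E2]. apply andI; auto.
    + apply andb_false_iff in E as [E|E].
      * I. mp. apply wk, B1, E. eapply andE1; auto. hyp.
      * I. mp. apply wk, B2, E. eapply andE2; auto. hyp.
  - destruct IHf1 as [A1 B1], IHf2 as [A2 B2]. split; intros E.
    + apply orb_true_iff in E as [E|E]. apply orI1; auto. apply orI2; auto.
    + apply orb_false_iff in E as [E1 E2]. I. eapply orE; auto. hyp.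
      mp. apply wk2, B1, E1. hyp. mp. apply wk2, B2, E2. hyp.
  - destruct IHf1 as [A1 B1], IHf2 as [A2 B2]. split; intros E.
    + apply orb_true_iff in E as [E|E].
      * apply negb_true_iff in E. I. apply botE; auto. mp. apply wk, B1, E. hyp.
      * I. apply wk, A2, E.
    + apply orb_false_iff in E as [E1 E2]. apply negb_false_iff in E1.
      I. mp. apply wk, B2, E2. mp. hyp. apply wk, A1, E1.
Qed.

Definition upd (v : nat -> bool) n b := fun p => if Nat.eqb p n then b else v p.
Definition smix n v p := if Nat.ltb p n then Var p else cst v p.

Lemma glivenko_aux T (HI : forall f, IPC f -> T f) f :
  (forall w, eval w f = false) -> forall n v, derives T [] (Neg (subst (smix n v) f)).
Proof.
  intros Hf n; induction n; intros v.
  - rewrite (subst_ext _ (cst v)). apply kal; auto. intros p; reflexivity.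
  - set (X := subst (smix (S n) v) f).
    assert (Ht : derives T [Var n] (Neg X)).
    { assert (R := replace T HI [Var n] (smix (S n) v) (smix n (upd v n true))).
      specialize (IHn (upd v n true)).
      I. mp. apply wk, lift, IHn. eapply iffE1; auto. apply wk, R.
      2: hyp. intros p. unfold smix, upd, cst.
      destruct (Nat.ltb_spec p (S n)), (Nat.ltb_spec p n), (Nat.eqb_spec p n); subst; try lia;
        apply iffI; auto; try hyp; try (apply topI; auto). }
    assert (Hf' : derives T [Neg (Var n)] (Neg X)).
    { assert (R := replace T HI [Neg (Var n)] (smix (S n) v) (smix n (upd v n false))).
      specialize (IHn (upd v n false)).
      I. mp. apply wk, lift, IHn. eapply iffE1; auto. apply wk, R.
      2: hyp. intros p. unfold smix, upd, cst.
      destruct (Nat.ltb_spec p (S n)), (Nat.ltb_spec p n), (Nat.eqb_spec p n); subst; try lia;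
        apply iffI; auto; try hyp; [mp; hyp | apply botE; auto; hyp]. }
    apply ded in Ht; auto. apply ded in Hf'; auto.
    I. eapply der_MP with (a := Neg (Var n)).
    + I. mp. mp. apply wk2, Hf'. hyp. hyp.
    + I. mp. mp. apply wk2, Ht. hyp. hyp.
Qed.

Lemma glivenko T (HI : forall f, IPC f -> T f) f :
  (forall w, eval w f = false) -> derives T [] (Neg f).
Proof.
  intros Hf. assert (H := glivenko_aux T HI f Hf (bnd f) (fun _ => true)).
  rewrite subst_bnd in H; auto. intros p Hp. unfold smix.
  destruct (Nat.ltb_spec p (bnd f)); [reflexivity|lia].
Qed.
Lemma derives_nil T f : MP_closed T -> derives T [] f -> T f.
Proof. intros HM H. remember [] as G. induction H; subst; auto. destruct H. eapply HM; eauto. Qed.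

Lemma iff_transfer T (HI : forall f, IPC f -> T f) G a b :
  derives T G (Iff a b) -> derives T G (Iff a (Neg (Neg a))) -> derives T G (Iff b (Neg (Neg b))).
Proof.
  intros Hab Ha. apply iffI; auto.
  - I. mp; hyp.
  - eapply iffE1; auto. apply wk; eauto. eapply iffE2; auto. apply wk; eauto.
    I. eapply der_MP with (a := Neg b). hyp. I. eapply der_MP with (a := a). hyp.
    apply (iffE2 T _ a b HI); [apply wk, wk, wk, Hab | hyp].
Qed.

Definition negv (p : nat) : form := Neg (Var p).

Lemma closure L (HL : intermediate_logic L) phi s :
  Lneg L (Iff phi (Neg (Neg phi))) -> stable L s ->
  Lneg L (Iff (subst s phi) (Neg (Neg (subst s phi)))).
Proof.
  destruct HL as [[HM [HI _]] HS]. unfold stable, Lneg, negsub. simpl. intros H Hs.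
  rewrite subst_subst.
  set (N := fun p => subst (fun p => Neg (Var p)) (s p)).
  apply (HS (fun p => Neg (N p))) in H. simpl in H. rewrite subst_subst in H. simpl in H.
  apply derives_nil; auto. eapply iff_transfer; auto. 2: apply der_thm, H.
  apply replace; auto. intros p. assert (Hp := Hs p). simpl in Hp. fold (N p) in Hp.
  apply iffI; auto.
  - eapply iffE2; auto. apply wk, der_thm, Hp. hyp.
  - eapply iffE1; auto. apply wk, der_thm, Hp. hyp.
Qed.

Lemma HIneg L : intermediate_logic L -> forall f, IPC f -> Lneg L f.
Proof. intros [[_ [HI _]] _] f H. apply HI, IPC_subst, H. Qed.

Lemma MPneg L : intermediate_logic L -> MP_closed (Lneg L).
Proof. intros [[HM _] _] a b H1 H2. unfold Lneg, negsub in *. simpl in H1. eapply HM; eauto. Qed.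

Lemma varst L : intermediate_logic L -> forall p, Lneg L (Iff (Var p) (Neg (Neg (Var p)))).
Proof.
  intros HL p. pose proof HL as [[HM [HI _]] _]. unfold Lneg, negsub; simpl.
  apply derives_nil; auto. apply iffI; auto.
  - I. mp; hyp.
  - I. mp. hyp. I. mp; hyp.
Qed.
Theorem lemma4p7 (L : form -> Prop) :
  intermediate_logic L ->
  (forall f, ND f -> L f) ->
  forall phi : form, consistent L phi ->
  (Lneg L (Iff phi (Neg (Neg phi))) <-> projective L (stable L) phi).
Proof.
  intros HL _ phi Hc.
  pose proof (HIneg L HL) as HI. pose proof (MPneg L HL) as HM.
  set (T := Lneg L) in *.
  assert (VS : forall G p, derives T G (Iff (Var p) (Neg (Neg (Var p))))).
  { intros G p. apply der_thm, varst, HL. }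
  split.
  - intros Hst.
    destruct (classic (exists v, eval v phi = true)) as [[v Hv]|Hn].
    2:{ exfalso. apply Hc. assert (Hf : forall w, eval w phi = false).
        { intros w. destruct (eval w phi) eqn:E; auto. exfalso; eauto. }
        mp. apply lift, (glivenko T HI phi Hf). hyp. }
    set (s := fun p => And (Imp phi (Var p)) (Imp (Neg phi) (cst v p))).
    assert (Hs : stable L s).
    { intros p. apply derives_nil; auto. apply iffI; auto.
      - I. mp; hyp.
      - apply andI; auto.
        + I. apply (iffE2 T _ _ _ HI (VS _ p)).
          I. eapply der_MP with (a := Neg (s p)). hyp. I.
          eapply der_MP with (a := Var p). hyp. mp. eapply andE1; auto. hyp. hyp.
        + I. assert (Hc' : derives T [Neg phi; Neg (Neg (s p))] (Neg (Neg (cst v p)))).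
          { I. eapply der_MP with (a := Neg (s p)). hyp. I.
            eapply der_MP with (a := cst v p). hyp.
            eapply der_MP with (a := Neg phi). apply (andE2 T _ (Imp phi (Var p)) _ HI). hyp. hyp. }
          unfold cst in *. destruct (v p). apply topI; auto.
          eapply der_MP with (a := Neg Bot). exact Hc'. I; hyp. }
    assert (F1 : derives T [] (Imp phi (subst s phi))).
    { I. assert (R := replace T HI [phi] s Var).
      assert (R' : forall p, derives T [phi] (Iff (s p) (Var p))).
      { intros p. apply iffI; auto.
      - mp. eapply andE1; auto. hyp. hyp.
      - apply andI; auto. I; hyp. I. apply botE; auto. eapply der_MP with (a := phi); hyp. }
      specialize (R R' phi). rewrite subst_id in R. apply (iffE2 T _ _ _ HI R). hyp. }
    assert (F2 : derives T [] (Imp (Neg phi) (subst s phi))).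
    { I. assert (R := replace T HI [Neg phi] s (cst v)).
      assert (R' : forall p, derives T [Neg phi] (Iff (s p) (cst v p))).
      { intros p. apply iffI; auto.
      - mp. eapply andE2; auto. hyp. hyp.
      - apply andI; auto. I. apply botE; auto. eapply der_MP with (a := phi); hyp. I; hyp. }
      apply (iffE2 T _ _ _ HI (R R' phi)). apply kal; auto. }
    exists s. split; [exact Hs|]. split.
    + apply derives_nil; auto. apply (iffE2 T _ _ _ HI (der_thm _ _ _ (closure L HL phi s Hst Hs))).
      I. eapply der_MP with (a := subst s phi). hyp.
      mp. apply lift, F2. I. eapply der_MP with (a := subst s phi). hyp.
      mp. apply lift, F1. hyp.
    + split; intros p.
      * mp. eapply andE1; auto. hyp. hyp.
      * apply andI; auto. I; hyp. I. apply botE; auto. eapply der_MP with (a := phi); hyp.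
  - intros [s [Hs [Hsp [H1 H2]]]].
    apply derives_nil; auto. apply iffI; auto.
    + I. mp; hyp.
    + assert (R := replace T HI [Neg (Neg phi)] s Var).
      assert (R' : forall p, derives T [Neg (Neg phi)] (Iff (s p) (Var p))). 2:{
      pose proof (R R' phi) as R2; rewrite subst_id in R2; apply (iffE1 T _ _ _ HI R2). apply der_thm, Hsp. }
      intros p.
      assert (K1 : derives T [] (Imp (s p) (Imp phi (Var p)))).
      { apply ded; auto. apply ded; auto. }
      assert (K2 : derives T [] (Imp (Var p) (Imp phi (s p)))).
      { apply ded; auto. apply ded; auto. }
      apply iffI; auto.
      * apply (iffE2 T _ _ _ HI (VS _ p)).
        I. eapply der_MP with (a := Neg phi). hyp. I.
        eapply der_MP with (a := Var p). hyp. mp. mp. apply lift, K1. hyp. hyp.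
      * apply (iffE2 T _ _ _ HI (der_thm _ _ _ (Hs p))).
        I. eapply der_MP with (a := Neg phi). hyp. I.
        eapply der_MP with (a := s p). hyp. mp. mp. apply lift, K2. hyp. hyp.
Qed.
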